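(* Let $N,M\ge1$, $\mathcal H_+=\mathbb C^N$, $\mathcal H_-=\mathbb C^M$, $\mathcal H=\mathcal H_+\oplus\mathcal H_-$. Fix $b>0$ and $d_1,\dots,d_M\in i\mathbb R$, and put $B=\mathrm{diag}(b,0,\dots,0)$ ($N\times N$) and $D=\mathrm{diag}(d_1,\dots,d_M)$. Consider rank one partial isometries $u:\mathcal H_+\to\mathcal H_-$ of the form: first column $(\alpha_1,\dots,\alpha_M)^T$ with $\sum_j|\alpha_j|^2=1$, all other columns zero, and set $\mu=\begin{pmatrix}0&-Bu^*\\ uB&D\end{pmatrix}$. Consider the system of equations $$\frac{\partial}{\partial t^n_k}u=i^{n+1}\big(\mu H^{n-1}_{k-1}(\mu)\big)_{--}\,u,\qquad n\ge1,\ 1\le k\le n/2+1 .$$ Let $p^n_{j,k}$ be the real-coefficient polynomials such that, for every such $u$, the $j$-th entry of the first column of the right-hand side equals $i\,p^n_{j,k}(|\alpha_1|^2,\dots,|\alpha_M|^2)\alpha_j$ (all other columns of the right-hand side being zero). Then for any initial values $\alpha^0_1,\dots,\alpha^0_M\in\mathbb C$ with $\sum_j|\alpha^0_j|^2=1$, the solution of this system with $\alpha_j=\alpha_j^0$ at all times zero is $$\alpha_j(t^1_1,t^2_1,t^2_2,\dots)=\alpha_j^0\exp\Big(i\sum_{n,\ k\le n/2+1}p^n_{j,k}\big(|\alpha^0_1|^2,\dots,|\alpha^0_M|^2\big)\,t^n_k\Big),\qquad j=1,\dots,M.$$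
   Context: $P_+$ and $P_-$ denote the orthogonal projectors of $\mathcal H$ onto $\mathcal H_+$ and $\mathcal H_-$; for an operator $X$ on $\mathcal H$, $X_{--}$ denotes the block $P_-XP_-$ regarded as an operator on $\mathcal H_-$. For integers $m\ge 0$ and $0\le l\le m+1$ and a matrix $\mu$ on $\mathcal H$, define $$H^m_l(\mu)=\sum_{\substack{i_0,\dots,i_m\in\{0,1\}\\ i_0+\dots+i_m=l}} P_+^{i_0}\mu P_+^{i_1}\mu\cdots\mu P_+^{i_m},$$ with $P_+^0=I$ the identity and $P_+^1=P_+$. The times $t^n_k$ are independent real variables (with only finitely many nonzero in the sum). The polynomials $p^n_{j,k}$ (whose existence, with real coefficients depending on $b,d_1,\dots,d_M$, is part of the setup) are those for which the equations read $\frac{\partial}{\partial t^n_k}\alpha_j=i\,p^n_{j,k}(|\alpha_1|^2,\dots,|\alpha_M|^2)\alpha_j$. *)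

(* Defs.v *)
From HB Require Import structures.
From mathcomp Require Import all_boot all_order all_algebra.
From mathcomp Require Import complex.
From mathcomp Require Import all_classical all_reals all_analysis.
From mathcomp Require mpoly.

Set Implicit Arguments.
Unset Strict Implicit.
Unset Printing Implicit Defensive.
Import Order.TTheory GRing.Theory Num.Theory.
Local Open Scope ring_scope.

Section Defs.
Variable R : realType.
Local Notation C := (complex R).

Definition ii : C := Complex 0 1.
Definition Cr (x : R) : C := Complex x 0.
Definition nsq (z : C) : R := complex.Re z ^+ 2 + complex.Im z ^+ 2.
Definition cexpi (th : R) : C := Complex (cos th) (sin th).

Definition adjmx m n (A : 'M[C]_(m, n)) : 'M[C]_(n, m) :=
  \matrix_(i, j) conjc (A j i).

Variables N M : nat.

(* P_+ on H = H_+ (+) H_-, H_+ = C^N, H_- = C^M *)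
Definition Pplus : 'M[C]_(N + M) := block_mx 1%:M 0 0 0.
Definition Ppow (e : bool) : 'M[C]_(N + M) := if e then Pplus else 1%:M.

(* H^m_l(mu) = sum over (i_0..i_m) in {0,1}^(m+1) with sum l of
   P_+^{i_0} mu P_+^{i_1} mu ... mu P_+^{i_m} *)
Definition Hml (m l : nat) (mu : 'M[C]_(N + M)) : 'M[C]_(N + M) :=
  \sum_(s : (m.+1).-tuple bool | (\sum_(r < m.+1) (tnth s r : nat))%N == l)
    (Ppow (tnth s ord0) *m
       \big[mulmx/1%:M]_(r < m) (mu *m Ppow (tnth s (lift ord0 r)))).

Definition Bmat (b : R) : 'M[C]_N :=
  \matrix_(i, j) if ((i : nat) == 0%N) && ((j : nat) == 0%N) then Cr b else 0.
Definition Dmat (d : 'I_M -> C) : 'M[C]_M := diag_mx (\row_j d j).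

Definition umat (alpha : 'I_M -> C) : 'M[C]_(M, N) :=
  \matrix_(j, c) if (c : nat) == 0%N then alpha j else 0.

Definition mumat (b : R) (d : 'I_M -> C) (u : 'M[C]_(M, N)) : 'M[C]_(N + M) :=
  block_mx 0 (- (Bmat b *m adjmx u)) (u *m Bmat b) (Dmat d).

Definition rhs (b : R) (d : 'I_M -> C) (n k : nat) (u : 'M[C]_(M, N))
  : 'M[C]_(M, N) :=
  let mu := mumat b d u in
  (ii ^+ n.+1) *: drsubmx (mu *m Hml (n - 1) (k - 1) mu) *m u.

Definition admk (n k : nat) : bool := (1 <= n)%N && (1 <= k <= (n./2).+1)%N.

Definition tadm (L : nat) (t : nat -> nat -> R) : Prop :=
  forall n k, ~~ (admk n k && (n <= L)%N) -> t n k = 0.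

Definition tupd (t : nat -> nat -> R) (n k : nat) (s : R) : nat -> nat -> R :=
  fun n' k' => if (n' == n) && (k' == k) then t n' k' + s else t n' k'.

Definition cderiv (f : R -> C) (x : R) (z : C) : Prop :=
  is_derive x 1 (fun s => complex.Re (f s)) (complex.Re z) /\
  is_derive x 1 (fun s => complex.Im (f s)) (complex.Im z).

Definition solves (b : R) (d : 'I_M -> C) (L : nat)
  (alpha : (nat -> nat -> R) -> 'I_M -> C) : Prop :=
  forall t, tadm L t -> forall n k, admk n k -> (n <= L)%N ->
    forall (j : 'I_M) (c : 'I_N),
      cderiv (fun s => umat (alpha (tupd t n k s)) j c) 0
             (rhs b d n k (umat (alpha t)) j c).

Definition solformula (p : nat -> nat -> 'I_M -> mpoly.mpoly M R)
  (alpha0 : 'I_M -> C) (L : nat) (t : nat -> nat -> R) (j : 'I_M) : C :=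
  alpha0 j * cexpi (\sum_(1 <= n < L.+1) \sum_(1 <= k < (n./2).+2)
      mpoly.meval (fun i => nsq (alpha0 i)) (p n k j) * t n k).

End Defs.
Arguments ii {R}.

(* Main.v *)
Require Import Defs.
From HB Require Import structures.
From mathcomp Require Import all_boot all_order all_algebra.
From mathcomp Require Import complex.
From mathcomp Require Import all_classical all_reals all_analysis.
From mathcomp Require mpoly.
From mathcomp Require Import ring lra.
Import Order.TTheory GRing.Theory Num.Theory.
Local Open Scope ring_scope.
Section S.
Context {R : realType}.
Lemma mulcE (a b c d : R) : (Complex a b * Complex c d) = Complex (a*c - b*d) (a*d + b*c).
Proof. by []. Qed.
Lemma ReE (a b : R) : complex.Re (Complex a b) = a. Proof. by []. Qed.
Lemma shift_deriv (F : R -> R) s0 d : is_derive (0:R) (1:R) (fun s => F (s0 + s)) d -> is_derive s0 (1:R) F d.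
Proof.
move=> H.
have -> : F = (fun s => F (s0 + s)) \o (fun x => x - s0).
  by apply: funext => x /=; rewrite addrC subrK.
apply: is_derive_eq.
  apply: is_derive1_comp; first by rewrite subrr; exact: H.
by rewrite subr0 mulr1.
Qed.

Local Notation C := (complex R).
Lemma Re_iP (P : R) (w : C) : complex.Re (ii * Cr P * w) = - (P * complex.Im w).
Proof. by case: w => a b; rewrite /ii /Cr !mulcE /=; ring. Qed.
Lemma Im_iP (P : R) (w : C) : complex.Im (ii * Cr P * w) = P * complex.Re w.
Proof. by case: w => a b; rewrite /ii /Cr !mulcE /=; ring. Qed.

Lemma nsq_const (g : R -> C) (Pf : R -> R) :
  (forall s, is_derive s (1:R) (fun x => complex.Re (g x)) (complex.Re (ii * Cr (Pf s) * g s))) ->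
  (forall s, is_derive s (1:R) (fun x => complex.Im (g x)) (complex.Im (ii * Cr (Pf s) * g s))) ->
  forall s, nsq (g s) = nsq (g 0).
Proof.
move=> HR HI s; rewrite /nsq.
apply: (is_derive_0_is_cst (f := fun x => complex.Re (g x) ^+ 2 + complex.Im (g x) ^+ 2)) => x.
have hR := HR x; have hI := HI x.
rewrite Re_iP in hR; rewrite Im_iP in hI.
apply: trigger_derive.
rewrite /GRing.scale /=.
ring.
Qed.

Lemma line_exp (g : R -> C) (P0 : R) :
  (forall s, is_derive s (1:R) (fun x => complex.Re (g x)) (complex.Re (ii * Cr P0 * g s))) ->
  (forall s, is_derive s (1:R) (fun x => complex.Im (g x)) (complex.Im (ii * Cr P0 * g s))) ->
  forall s, g s = g 0 * cexpi (P0 * s).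
Proof.
move=> HR HI s.
have eA : complex.Re (g 0) = complex.Re (g s) * cos (P0 * s) + complex.Im (g s) * sin (P0 * s).
  have -> : complex.Re (g 0) = complex.Re (g 0) * cos (P0 * 0) + complex.Im (g 0) * sin (P0 * 0).
    by rewrite mulr0 cos0 sin0 mulr1 mulr0 addr0.
  apply: (is_derive_0_is_cst (f := fun x => complex.Re (g x) * cos (P0 * x) + complex.Im (g x) * sin (P0 * x))) => x.
  have hR := HR x; have hI := HI x.
  rewrite Re_iP in hR; rewrite Im_iP in hI.
  apply: trigger_derive.
  rewrite /GRing.scale /=.
  ring.
have eB : complex.Im (g 0) = complex.Im (g s) * cos (P0 * s) - complex.Re (g s) * sin (P0 * s).
  have -> : complex.Im (g 0) = complex.Im (g 0) * cos (P0 * 0) - complex.Re (g 0) * sin (P0 * 0).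
    by rewrite mulr0 cos0 sin0 mulr1 mulr0 subr0.
  apply: (is_derive_0_is_cst (f := fun x => complex.Im (g x) * cos (P0 * x) - complex.Re (g x) * sin (P0 * x))) => x.
  have hR := HR x; have hI := HI x.
  rewrite Re_iP in hR; rewrite Im_iP in hI.
  apply: trigger_derive.
  rewrite /GRing.scale /=.
  ring.
have h1 := cos2Dsin2 (P0 * s).
move: eA eB; case: (g 0) => A0 B0 /= -> ->.
case: (g s) => a b /=.
rewrite /cexpi mulcE; congr Complex.
- by rewrite -[LHS]mulr1 -h1; ring.
- by rewrite -[LHS]mulr1 -h1; ring.
Qed.

Definition theta (c : nat -> nat -> R) (L : nat) (t : nat -> nat -> R) : R :=
  \sum_(1 <= n < L.+1) \sum_(1 <= k < (n./2).+2) c n k * t n k.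

Lemma theta_upd c L t n0 k0 s : admk n0 k0 -> (n0 <= L)%N ->
  theta c L (tupd t n0 k0 s) = theta c L t + c n0 k0 * s.
Proof.
move=> /andP[h1 /andP[h2 h3]] hL; rewrite /theta.
have E : forall n k, c n k * tupd t n0 k0 s n k =
   c n k * t n k + (if (n == n0) && (k == k0) then c n k * s else 0).
  by move=> n k; rewrite /tupd; case: ifP => _; rewrite ?addr0 // mulrDr.
transitivity (\sum_(1 <= n < L.+1) (\sum_(1 <= k < (n./2).+2) c n k * t n k +
   \sum_(1 <= k < (n./2).+2) (if (n == n0) && (k == k0) then c n k * s else 0))).
  by apply: eq_bigr => n _; rewrite -big_split; apply: eq_bigr => k _; exact: E.
rewrite big_split /=; congr (_ + _).
rewrite (bigD1_seq n0) ?mem_index_iota ?iota_uniq //=; last by rewrite h1 ltnS.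
rewrite (bigD1_seq k0) ?mem_index_iota ?iota_uniq //=; last by rewrite h2 ltnS.
rewrite !eqxx /= big1; last by move=> k /negbTE ->.
rewrite big1; first by rewrite !addr0.
by move=> n /negbTE hn; apply: big1 => k _; rewrite hn.
Qed.

Lemma tupd_tupd (t : nat -> nat -> R) n k a b : tupd (tupd t n k a) n k b = tupd t n k (a + b).
Proof.
apply: funext => n'; apply: funext => k'; rewrite /tupd.
by case: ifP => h; rewrite ?h // addrA.
Qed.

Lemma tupd0 (t : nat -> nat -> R) n k : tupd t n k 0 = t.
Proof.
apply: funext => n'; apply: funext => k'; rewrite /tupd.
by case: ifP => _ //; rewrite addr0.
Qed.

Lemma tadm_upd L (t : nat -> nat -> R) n k s : tadm L t -> admk n k -> (n <= L)%N -> tadm L (tupd t n k s).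
Proof.
move=> ht ha hL n' k' hn; rewrite /tupd; case: ifP => [/andP[/eqP e1 /eqP e2]|_].
  by move: hn; rewrite e1 e2 ha hL.
exact: ht.
Qed.

Lemma cexpi0 : cexpi (0:R) = 1.
Proof. by rewrite /cexpi cos0 sin0. Qed.

Lemma cexpiD (x y : R) : cexpi (x + y) = cexpi x * cexpi y.
Proof. by rewrite /cexpi mulcE cosD sinD; congr Complex; ring. Qed.

Lemma nsq_cexpi (a : C) (x : R) : nsq (a * cexpi x) = nsq a.
Proof.
case: a => a b; rewrite /nsq /cexpi mulcE /=.
have h := cos2Dsin2 x.
rewrite -[in RHS](mulr1 (a ^+ 2)) -[in RHS](mulr1 (b ^+ 2)) -h; ring.
Qed.

Lemma deriv_expR (w : C) (th P s : R) :
  is_derive s (1:R) (fun x => complex.Re (w * cexpi (th + P * x)))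
     (complex.Re (ii * Cr P * (w * cexpi (th + P * s)))).
Proof.
rewrite Re_iP; case: w => a b; rewrite /cexpi /=.
apply: trigger_derive; rewrite /GRing.scale /=; ring.
Qed.
Lemma deriv_expI (w : C) (th P s : R) :
  is_derive s (1:R) (fun x => complex.Im (w * cexpi (th + P * x)))
     (complex.Im (ii * Cr P * (w * cexpi (th + P * s)))).
Proof.
rewrite Im_iP; case: w => a b; rewrite /cexpi /=.
apply: trigger_derive; rewrite /GRing.scale /=; ring.
Qed.
End S.

Theorem theorem4p2 (R : realType) (N M : nat) (hN : (0 < N)%N) (hM : (0 < M)%N)
  (b : R) (hb : 0 < b) (d : 'I_M -> complex R)
  (hd : forall j, complex.Re (d j) = 0)
  (p : nat -> nat -> 'I_M -> mpoly.mpoly M R)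
  (hp : forall n k, admk n k ->
     forall alpha : 'I_M -> complex R, \sum_j nsq (alpha j) = 1 ->
       forall (j : 'I_M) (c : 'I_N),
         rhs b d n k (umat N alpha) j c =
           if (c : nat) == 0%N then
             ii * Cr (mpoly.meval (fun i => nsq (alpha i)) (p n k j)) * alpha j
           else 0)
  (alpha0 : 'I_M -> complex R) (h0 : \sum_j nsq (alpha0 j) = 1)
  (L : nat) :
  let sol := solformula p alpha0 L in
  (forall j, sol (fun _ _ => 0) j = alpha0 j) /\
  (forall t, tadm L t -> \sum_j nsq (sol t j) = 1) /\
  solves N b d L sol /\
  (forall f : (nat -> nat -> R) -> 'I_M -> complex R,
     (forall t, tadm L t -> \sum_j nsq (f t j) = 1) ->
     (forall j, f (fun _ _ => 0) j = alpha0 j) ->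
     solves N b d L f ->
     forall t, tadm L t -> forall j, f t j = sol t j).
Proof.
Proof.
move=> sol.
have solE : forall t j, sol t j = alpha0 j *
  cexpi (theta (fun n k => mpoly.meval (fun i => nsq (alpha0 i)) (p n k j)) L t) by [].
have part1 : forall j, sol (fun _ _ => 0) j = alpha0 j.
  move=> j; rewrite solE /theta big1 ?cexpi0 ?mulr1 // => n _.
  by rewrite big1 // => k _; rewrite mulr0.
have nsq_sol : forall t j, nsq (sol t j) = nsq (alpha0 j).
  by move=> t j; rewrite solE nsq_cexpi.
have part2 : forall t, \sum_j nsq (sol t j) = 1.
  by move=> t; under eq_bigr do rewrite nsq_sol; exact: h0.
have nsq_solF : forall t, (fun i => nsq (sol t i)) = (fun i => nsq (alpha0 i)).
  by move=> t; apply: funext => i; rewrite nsq_sol.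
pose c0 : 'I_N := Ordinal hN.
have umatE : forall (a : 'I_M -> complex R) j (c : 'I_N),
    umat N a j c = if (c : nat) == 0%N then a j else 0.
  by move=> a j c; rewrite mxE.
have part3 : solves N b d L sol.
  move=> t ht n k hnk hnL j c.
  rewrite hp // nsq_solF.
  case hc: ((c : nat) == 0%N).
    have -> : (fun s => umat N (sol (tupd t n k s)) j c) =
      (fun s => alpha0 j * cexpi (theta (fun n k => mpoly.meval (fun i => nsq (alpha0 i)) (p n k j)) L t
          + mpoly.meval (fun i => nsq (alpha0 i)) (p n k j) * s)).
      by apply: funext => s; rewrite umatE hc solE theta_upd.
    split.
      have := deriv_expR (alpha0 j) (theta (fun n k => mpoly.meval (fun i => nsq (alpha0 i)) (p n k j)) L t)
          (mpoly.meval (fun i => nsq (alpha0 i)) (p n k j)) 0.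
      by rewrite mulr0 addr0.
    have := deriv_expI (alpha0 j) (theta (fun n k => mpoly.meval (fun i => nsq (alpha0 i)) (p n k j)) L t)
        (mpoly.meval (fun i => nsq (alpha0 i)) (p n k j)) 0.
    by rewrite mulr0 addr0.
  have -> : (fun s => umat N (sol (tupd t n k s)) j c) = (fun _ => 0).
    by apply: funext => s; rewrite umatE hc.
  by split; apply: is_derive_cst.
split; first exact: part1.
split; first by move=> t _; exact: part2.
split; first exact: part3.
move=> f hf1 hf0 hfs.
have key : forall t n k, tadm L t -> admk n k -> (n <= L)%N -> (forall j, f t j = sol t j) ->
    forall s j, f (tupd t n k s) j = sol (tupd t n k s) j.
  move=> t n k ht hnk hnL hft s j.
  pose G := fun s => f (tupd t n k s).
  have HD : forall s0 j',
     is_derive s0 (1:R) (fun x => complex.Re (G x j'))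
       (complex.Re (ii * Cr (mpoly.meval (fun i => nsq (G s0 i)) (p n k j')) * G s0 j')) /\
     is_derive s0 (1:R) (fun x => complex.Im (G x j'))
       (complex.Im (ii * Cr (mpoly.meval (fun i => nsq (G s0 i)) (p n k j')) * G s0 j')).
    move=> s0 j'.
    have ht0 : tadm L (tupd t n k s0) by apply: tadm_upd.
    have := hfs (tupd t n k s0) ht0 n k hnk hnL j' c0.
    rewrite hp //; last exact: hf1.
    have -> : (fun s => umat N (f (tupd (tupd t n k s0) n k s)) j' c0) = (fun s => G (s0 + s) j').
      by apply: funext => s'; rewrite umatE /= tupd_tupd.
    move=> [h1 h2]; split.
      exact: (@shift_deriv _ (fun x => complex.Re (G x j')) _ _ h1).
    exact: (@shift_deriv _ (fun x => complex.Im (G x j')) _ _ h2).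
  have Hn : forall s' j', nsq (G s' j') = nsq (G 0 j').
    move=> s' j'.
    exact: (@nsq_const _ (fun x => G x j')
      (fun s => mpoly.meval (fun i => nsq (G s i)) (p n k j'))
      (fun s => proj1 (HD s j')) (fun s => proj2 (HD s j')) s').
  have HP : forall s', (fun i => nsq (G s' i)) = (fun i => nsq (G 0 i)).
    by move=> s'; apply: funext => i; rewrite Hn.
  have E : G s j = G 0 j * cexpi (mpoly.meval (fun i => nsq (G 0 i)) (p n k j) * s).
    apply: (@line_exp _ (fun x => G x j)) => s0.
      by have [h1 _] := HD s0 j; rewrite HP in h1.
    by have [_ h1] := HD s0 j; rewrite HP in h1.
  have HG0 : G 0 = sol t by rewrite /G tupd0; apply: funext => i; rewrite hft.
  rewrite HG0 nsq_solF in E.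
  change (G s j = sol (tupd t n k s) j); rewrite E.
  by rewrite !solE theta_upd // cexpiD mulrA.
have ind : forall (S : seq (nat * nat)) t, tadm L t -> (forall n k, t n k != 0 -> (n, k) \in S) ->
    forall j, f t j = sol t j.
  elim => [|[a b'] S IH] t ht hS j.
    have -> : t = fun _ _ => 0.
      apply: funext => n; apply: funext => k; apply/eqP; apply: contraT => /hS.
      by rewrite in_nil.
    by rewrite hf0 part1.
  pose t' := fun n k => if (n == a) && (k == b') then 0 else t n k.
  have ht' : tadm L t'.
    by move=> n k hn; rewrite /t'; case: ifP => // _; exact: ht.
  have hS' : forall n k, t' n k != 0 -> (n, k) \in S.
    move=> n k; rewrite /t'; case: ifP => [_|hnk]; first by rewrite eqxx.
    move=> /hS; rewrite in_cons => /orP [/eqP [e1 e2] | //].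
    by move: hnk; rewrite e1 e2 !eqxx.
  have IH' := IH t' ht' hS'.
  case hadm: (admk a b' && (a <= L)%N).
    move/andP: hadm => [ha haL].
    have -> : t = tupd t' a b' (t a b').
      apply: funext => n; apply: funext => k; rewrite /tupd /t'.
      case: ifP => [/andP[/eqP -> /eqP ->]|h]; first by rewrite !eqxx add0r.
      by rewrite h.
    by apply: key.
  have -> : t = t'.
    apply: funext => n; apply: funext => k; rewrite /t'.
    by case: ifP => [/andP[/eqP -> /eqP ->]|_] //; apply: ht; rewrite hadm.
  exact: IH'.
move=> t ht j.
apply: (ind [seq (n, k) | n <- iota 0 L.+1, k <- iota 0 L.+2] t ht _ j).
move=> n k hnk.
case h: (admk n k && (n <= L)%N); last by move: hnk; rewrite ht ?h // eqxx.
move/andP: h => [/andP[h1 /andP[h2 h3]] hL].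
have hh : (n./2 <= n)%N by rewrite leq_half_double -addnn; apply: leqW; exact: leq_addl.
apply: allpairs_f; rewrite mem_iota /= add0n ltnS //.
by apply: (leq_trans h3); rewrite !ltnS (leq_trans hh hL).
Qed.
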